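(* Let $(\mathcal G,\alpha)$ be a matching model such that $\alpha$ satisfies the stability condition $|\alpha_{\mathcal I}|<|\alpha_{\mathcal E(\mathcal I)}|$ for all $\mathcal I\in\mathbb I$. Then the stationary mean number of items under FCFS equals $$\mathbb E[Q]=\Big(1+\sum_{\mathcal I\in\mathbb I}T_{\mathcal I}\Big)^{-1}\Big(\sum_{\mathcal I\in\mathbb I}E_{\mathcal I}\Big).$$
   Context: A matching model consists of a finite connected simple graph $\mathcal G=(\mathcal V,\xi)$ (the compatibility graph), $\mathcal V=\{1,\dots,n\}$, and a probability distribution $\alpha=(\alpha_1,\dots,\alpha_n)$ on $\mathcal V$ with all $\alpha_i>0$. In each time step an item of class $i$ arrives with probability proportional to $\alpha_i$. For $i\in\mathcal V$ let $\mathcal E(i)$ be the set of neighbours of $i$; for $V\subseteq\mathcal V$ let $\mathcal E(V)=\bigcup_{i\in V}\mathcal E(i)$ and $|\alpha_V|=\sum_{i\in V}\alpha_i$. The state is a finite word $w=w_1\cdots w_q$ over $\mathcal V$ with no two letters adjacent in $\mathcal G$ (unmatched items in order of arrival). Under FCFS, if an item of class $i$ arrives in state $w$ and some letter of $w$ lies in $\mathcal E(i)$, the first such letter is deleted; otherwise $i$ is appended. An independent set is a non-empty subset of $\mathcal V$ with no two elements adjacent; $\mathbb I$ is the set of independent sets. Under the stability condition the chain is positive recurrent with stationary distribution $\pi(w)=\pi_0\prod_{i=1}^q\alpha_{w_i}/|\alpha_{\mathcal E(\{w_1,\dots,w_i\})}|$, and $\mathbb E[Q]=\sum_w |w|\pi(w)$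 where $|w|$ is the length of $w$. For $\mathcal I\in\mathbb I$ and an ordering $(i_1,\dots,i_m)$ of its elements ($m=|\mathcal I|$), write $\mathcal I_k=\{i_1,\dots,i_k\}$ and $$T_{(i_1,\dots,i_m)}=\prod_{k=1}^m\frac{\alpha_{i_k}}{|\alpha_{\mathcal E(\mathcal I_k)}|-|\alpha_{\mathcal I_k}|},\qquad E_{(i_1,\dots,i_m)}=\sum_{l=1}^m\frac{|\alpha_{\mathcal E(\mathcal I_l)}|}{|\alpha_{\mathcal E(\mathcal I_l)}|-|\alpha_{\mathcal I_l}|}\,T_{(i_1,\dots,i_m)}.$$ $T_{\mathcal I}$ (resp. $E_{\mathcal I}$) is the sum of $T_{(i_1,\dots,i_m)}$ (resp. $E_{(i_1,\dots,i_m)}$) over all $m!$ orderings of $\mathcal I$. *)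

(* Defs.v *)
From HB Require Import structures.
From mathcomp Require Import all_boot all_order all_algebra.
From mathcomp Require Import boolp classical_sets reals topology normedtype sequences.
Set Implicit Arguments. Unset Strict Implicit. Unset Printing Implicit Defensive.
Import Order.TTheory GRing.Theory Num.Theory.
Local Open Scope ring_scope.

Section MatchingModel.
Variables (R : realType) (V : finType) (e : rel V) (alpha : V -> R).

Definition nbhd (S : {set V}) : {set V} := [set j | [exists i in S, e i j]].

Definition asum (S : {set V}) : R := \sum_(j in S) alpha j.

Definition indep (S : {set V}) : bool :=
  (S != finset.set0) && [forall i in S, forall j in S, ~~ e i j].

(* admissible state: a word with no two letters adjacent *)
Definition word_ok (s : seq V) : bool :=
  all (fun x => all (fun y => ~~ e x y) s) s.

(* unnormalised stationary weight prod_{i} alpha_{w_i} / |alpha_{E({w_1..w_i})}| *)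
Definition phi (q : nat) (w : q.-tuple V) : R :=
  \prod_(i < q) (alpha (tnth w i) / asum (nbhd [set x in take i.+1 w])).

Definition wsum (q : nat) : R :=
  \sum_(w : q.-tuple V | word_ok w) phi w.

(* prefix I_{k+1} = {i_1,...,i_{k+1}} of an ordering t (0-indexed k) *)
Definition pref (m : nat) (t : m.-tuple V) (k : nat) : {set V} :=
  [set x in take k.+1 t].

Definition Tord (m : nat) (t : m.-tuple V) : R :=
  \prod_(k < m) (alpha (tnth t k) /
                 (asum (nbhd (pref t k)) - asum (pref t k))).

Definition Eord (m : nat) (t : m.-tuple V) : R :=
  (\sum_(l < m) (asum (nbhd (pref t l)) /
                 (asum (nbhd (pref t l)) - asum (pref t l)))) * Tord t.

Definition TI (I : {set V}) : R :=
  \sum_(t : #|I|.-tuple V | perm_eq t (enum I)) Tord t.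

Definition EI (I : {set V}) : R :=
  \sum_(t : #|I|.-tuple V | perm_eq t (enum I)) Eord t.

End MatchingModel.

(* Main.v *)
Require Import Defs.
From HB Require Import structures.
From mathcomp Require Import all_boot all_order all_algebra.
From mathcomp Require Import reals.
From mathcomp Require Import ring lra zify.
Set Implicit Arguments. Unset Strict Implicit. Unset Printing Implicit Defensive.
Import Order.TTheory GRing.Theory Num.Theory.
Local Open Scope ring_scope.

Section Comb.
Variables (R : realType) (V : finType) (e : rel V) (alpha : V -> R).
Implicit Types (A B : {set V}) (s : seq V).

Definition pw (S : {set V}) := [forall i in S, forall j in S, ~~ e i j].
Definition sset (s : seq V) : {set V} := [set x in s].

Lemma sset_cons x s : sset (x :: s) = x |: sset s.
Proof. by apply/setP=> y; rewrite !inE. Qed.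
Lemma sset_nil : sset [::] = set0.
Proof. by apply/setP=> y; rewrite !inE. Qed.

Lemma pw_sub (A B : {set V}) : A \subset B -> pw B -> pw A.
Proof.
move=> sAB /forall_inP H; apply/forall_inP=> i iA; apply/forall_inP=> j jA.
by move: (H i (subsetP sAB i iA)) => /forall_inP; apply; apply: (subsetP sAB).
Qed.

Lemma setU1_idE (x : V) (A : {set V}) : x \in A -> x |: A = A.
Proof. by move=> xA; apply/setP=> y; rewrite in_setU1; case: eqP => // ->. Qed.

Local Notation asm := (asum alpha).
Local Notation nb := (nbhd e).

Fixpoint wt (A : {set V}) (s : seq V) : R :=
  if s is x :: s' then alpha x / asm (nb (x |: A)) * wt (x |: A) s' else 1.

Definition cc A x := alpha x / asm (nb (x |: A)).
Definition dd A x := alpha x / (asm (nb (x |: A)) - asm (x |: A)).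
Definition rr B := asm (nb B) / (asm (nb B) - asm B).

Fixpoint Tg A s := if s is x :: s' then dd A x * Tg (x |: A) s' else 1.
Fixpoint Sg A s := if s is x :: s' then rr (x |: A) + Sg (x |: A) s' else 0.

Definition valid A (s : seq V) :=
  [&& uniq s, all (fun y => y \notin A) s & pw (A :|: sset s)].

Definition ff A q := \sum_(w : q.-tuple V | pw (A :|: sset w)) wt A w.
Definition UU A m := \sum_(t : m.-tuple V | valid A t) Tg A t.
Definition VV A m := \sum_(t : m.-tuple V | valid A t) Sg A t * Tg A t.

Lemma big_tuple_cons q (F : q.+1.-tuple V -> R) :
  \sum_(w : q.+1.-tuple V) F w =
  \sum_(x : V) \sum_(w : q.-tuple V) F (cons_tuple x w).
Proof.
rewrite pair_big /=.
rewrite (reindex (fun p : V * q.-tuple V => cons_tuple p.1 p.2)) //=.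
exists (fun w : q.+1.-tuple V => (thead w, behead_tuple w)).
  move=> [x w] _ /=.
  by rewrite theadE; congr (_, _); apply: val_inj.
move=> w _ /=.
by case/tupleP: w => x w; apply: val_inj; rewrite /= theadE.
Qed.

Lemma big_tuple_cons_cond q (P : pred (q.+1.-tuple V)) (F : q.+1.-tuple V -> R) :
  \sum_(w | P w) F w =
  \sum_(x : V) \sum_(w : q.-tuple V | P (cons_tuple x w)) F (cons_tuple x w).
Proof.
rewrite big_mkcond big_tuple_cons; apply: eq_bigr => x _.
by rewrite [RHS]big_mkcond.
Qed.

Lemma setU_cons A x s : A :|: sset (x :: s) = (x |: A) :|: sset s.
Proof. by rewrite sset_cons setUA (setUC A). Qed.

Lemma ff0 A : pw A -> ff A 0 = 1.
Proof.
move=> pA; rewrite /ff (big_pred1 [tuple]) // => w /=.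
by rewrite [w]tuple0 /= sset_nil setU0 pA; apply/esym/eqP.
Qed.

Lemma ffS A q :
  ff A q.+1 = \sum_(x | pw (x |: A)) cc A x * ff (x |: A) q.
Proof.
rewrite /ff big_tuple_cons_cond [RHS]big_mkcond; apply: eq_bigr => x _ /=.
under eq_bigl => w do rewrite setU_cons.
case: ifP => pxA; first by rewrite mulr_sumr.
apply: big1 => w pw'; exfalso; move/negP: pxA; apply.
by apply: pw_sub pw'; apply: subsetUl.
Qed.

Lemma valid_cons A x s :
  valid A (x :: s) = [&& x \notin A, pw (x |: A) & valid (x |: A) s].
Proof.
rewrite /valid /= setU_cons.
have -> : all (fun y => y \notin x |: A) s = (x \notin s) && all (fun y => y \notin A) s.
  elim: s => [//|y s IH] /=; rewrite IH in_setU1 in_cons negb_or (eq_sym x y).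
  by case: (y == x); case: (y \in A); case: (x \in s).
case P: (pw ((x |: A) :|: sset s)); last by rewrite !andbF.
rewrite (pw_sub (subsetUl _ _) P).
by case: (x \in s); case: (x \in A); case: (uniq s); case: (all _ s).
Qed.

Lemma valid_nil A : valid A [::] = pw A.
Proof. by rewrite /valid /= sset_nil setU0. Qed.

Lemma UU0 A : pw A -> UU A 0 = 1.
Proof.
move=> pA; rewrite /UU (big_pred1 [tuple]) // => w /=.
by rewrite [w]tuple0 valid_nil pA; apply/esym/eqP.
Qed.

Lemma VV0 A : VV A 0 = 0.
Proof. by apply: big1 => w _; rewrite [w]tuple0 /= mul0r. Qed.

Lemma UUS A m :
  UU A m.+1 = \sum_(x | (x \notin A) && pw (x |: A)) dd A x * UU (x |: A) m.
Proof.
rewrite /UU big_tuple_cons_cond [RHS]big_mkcond; apply: eq_bigr => x _ /=.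
under eq_bigl => w do rewrite valid_cons.
case: ifP => pxA; first by rewrite mulr_sumr; apply: eq_big => // w; rewrite andbA pxA.
by apply: big1 => w; rewrite andbA pxA.
Qed.

Lemma VVS A m :
  VV A m.+1 = \sum_(x | (x \notin A) && pw (x |: A))
                 dd A x * (rr (x |: A) * UU (x |: A) m + VV (x |: A) m).
Proof.
rewrite /VV /UU big_tuple_cons_cond [RHS]big_mkcond; apply: eq_bigr => x _ /=.
under eq_bigl => w do rewrite valid_cons.
case: ifP => pxA; last by apply: big1 => w; rewrite andbA pxA.
rewrite mulr_sumr -big_split /= mulr_sumr; apply: eq_big => [w|w _]; first by rewrite andbA pxA.
ring.
Qed.

Lemma valid_size A s : valid A s -> (size s <= #|~: A|)%N.
Proof.
case/and3P=> us allA _; rewrite -(card_uniqP us); apply: subset_leq_card.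
by apply/subsetP => y ys; rewrite inE; exact: (allP allA).
Qed.

Lemma UU_big A m : (#|~: A| < m)%N -> UU A m = 0.
Proof.
move=> lt; apply: big1 => t /valid_size; rewrite size_tuple => le; exfalso; lia.
Qed.

Lemma VV_big A m : (#|~: A| < m)%N -> VV A m = 0.
Proof.
move=> lt; apply: big1 => t /valid_size; rewrite size_tuple => le; exfalso; lia.
Qed.

Definition Tsum A := \sum_(m < #|V|.+1) UU A m.
Definition Esum A := \sum_(m < #|V|.+1) VV A m.

Lemma shift_sum (G : nat -> R) (B : {set V}) : B != set0 ->
  (forall m, (#|~: B| < m)%N -> G m = 0) ->
  \sum_(m < #|V|) G m = \sum_(m < #|V|.+1) G m.
Proof.
move=> B0 H; rewrite big_ord_recr /= H ?addr0 //.
have := cardsC B; have : (0 < #|B|)%N by rewrite card_gt0.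
move=> h1 h2; by rewrite -h2 -{1}(add0n #|~: B|) ltn_add2r.
Qed.

Lemma TsumS A : pw A ->
  Tsum A = 1 + \sum_(x | (x \notin A) && pw (x |: A)) dd A x * Tsum (x |: A).
Proof.
move=> pA; rewrite /Tsum big_ord_recl UU0 //; congr (_ + _).
under eq_bigr => i _ do rewrite lift0 UUS.
rewrite exchange_big /=; apply: eq_bigr => x _; rewrite -mulr_sumr; congr (_ * _).
have x0 : x |: A != set0 by apply/set0Pn; exists x; rewrite setU11.
exact: (shift_sum x0 (@UU_big _)).
Qed.

Lemma EsumS A :
  Esum A = \sum_(x | (x \notin A) && pw (x |: A))
              dd A x * (rr (x |: A) * Tsum (x |: A) + Esum (x |: A)).
Proof.
rewrite /Esum big_ord_recl VV0 add0r.
under eq_bigr => i _ do rewrite lift0 VVS.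
rewrite exchange_big /=; apply: eq_bigr => x _; rewrite -mulr_sumr; congr (_ * _).
rewrite /Tsum mulr_sumr -big_split /=.
have x0 : x |: A != set0 by apply/set0Pn; exists x; rewrite setU11.
apply: (shift_sum (G := fun m => rr (x |: A) * UU (x |: A) m + VV (x |: A) m) x0).
by move=> m lt; rewrite UU_big // VV_big // mulr0 addr0.
Qed.


Lemma bump0 n : bump 0 n = n.+1.
Proof. by []. Qed.

Lemma pref_cons m x (t : m.-tuple V) k : pref (cons_tuple x t) k.+1 = x |: pref t k.
Proof. by apply/setP=> y; rewrite !inE. Qed.

Lemma pref_cons0 m x (t : m.-tuple V) : pref (cons_tuple x t) 0 = [set x].
Proof. apply/setP=> y; rewrite !inE /=; case: t => [[|z s] hs] /=; by rewrite ?inE ?orbF. Qed.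

Lemma setU_pref A x (P : {set V}) : A :|: (x |: P) = (x |: A) :|: P.
Proof. by rewrite setUA (setUC A). Qed.

Lemma Tg_tuple m A (t : m.-tuple V) : Tg A t =
  \prod_(k < m) (alpha (tnth t k) / (asm (nb (A :|: pref t k)) - asm (A :|: pref t k))).
Proof.
elim: m A t => [|m IH] A t; first by rewrite [t]tuple0 big_ord0.
case/tupleP: t => x t; rewrite big_ord_recl /= IH tnth0 pref_cons0 (setUC A [set x]).
congr (_ * _); apply: eq_bigr => i _. by rewrite tnthS bump0 pref_cons setU_pref.
Qed.

Lemma Sg_tuple m A (t : m.-tuple V) : Sg A t = \sum_(k < m) rr (A :|: pref t k).
Proof.
elim: m A t => [|m IH] A t; first by rewrite [t]tuple0 big_ord0.
case/tupleP: t => x t; rewrite big_ord_recl /= IH pref_cons0 (setUC A [set x]).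
congr (_ + _); apply: eq_bigr => i _; by rewrite bump0 pref_cons setU_pref.
Qed.

Lemma wt_tuple m A (t : m.-tuple V) : wt A t =
  \prod_(k < m) (alpha (tnth t k) / asm (nb (A :|: pref t k))).
Proof.
elim: m A t => [|m IH] A t; first by rewrite [t]tuple0 big_ord0.
case/tupleP: t => x t; rewrite big_ord_recl /= IH tnth0 pref_cons0 (setUC A [set x]).
congr (_ * _); apply: eq_bigr => i _; by rewrite tnthS bump0 pref_cons setU_pref.
Qed.

Lemma word_okE s : word_ok e s = pw (sset s).
Proof.
apply/allP/forall_inP => [H i|H i si].
  rewrite /sset inE => si; apply/forall_inP => j; rewrite inE => sj.
  exact: (allP (H i si) j sj).
apply/allP => j sj.
have := H i; rewrite /sset inE => /(_ si) /forall_inP; apply; by rewrite inE.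
Qed.

Lemma wsum_ff q : wsum e alpha q = ff set0 q.
Proof.
rewrite /wsum /ff; apply: eq_big => [w|w _]; first by rewrite word_okE set0U.
rewrite wt_tuple /phi; apply: eq_bigr => i _; by rewrite set0U.
Qed.

Lemma sum_indep_perm (F : forall m, m.-tuple V -> R) :
  \sum_(I : {set V} | indep e I) \sum_(t : #|I|.-tuple V | perm_eq t (enum I)) F _ t =
  \sum_(m < #|V|) \sum_(t : m.+1.-tuple V | uniq t && pw (sset t)) F _ t.
Proof.
transitivity (\sum_(I | indep e I) \sum_(m < #|V|)
   \sum_(t : m.+1.-tuple V | (m.+1 == #|I|) && perm_eq t (enum I)) F _ t).
  apply: eq_bigr => I /andP[I0 _].
  have cI : (0 < #|I|)%N by rewrite card_gt0.
  pose G n := \sum_(t : n.-tuple V | perm_eq t (enum I)) F n t.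
  transitivity (\sum_(m < #|V|) if m.+1 == #|I| then G m.+1 else 0); last first.
    apply: eq_bigr => m _; case: (m.+1 == #|I|) => //=; by rewrite big_pred0_eq.
  rewrite -big_mkcond /=.
  rewrite (eq_bigl (fun m : 'I_#|V| => (m : nat) == #|I|.-1)); last first.
    by move=> m /=; apply/eqP/eqP => [<-|->] //; rewrite prednK.
  rewrite (big_ord1_eq _ (fun j => G j.+1)) ifT; first by rewrite prednK.
  by rewrite prednK //; exact: max_card.
rewrite exchange_big /=; apply: eq_bigr => m _.
rewrite (exchange_big_dep (fun t : m.+1.-tuple V => uniq t && pw (sset t))) /=; last first.
  move=> I t /andP[_ pI] /andP[_ pt]; rewrite (perm_uniq pt) enum_uniq /=.
  have -> : sset t = I by apply/setP => y; rewrite /sset inE (perm_mem pt) mem_enum.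
  exact: pI.
apply: eq_bigr => t /andP[ut pt]; rewrite (big_pred1 (sset t)) // => I /=.
apply/idP/eqP.
  move=> /and3P[_ _ pe]; apply/setP => y; by rewrite /sset inE (perm_mem pe) mem_enum.
move=> ->; apply/and3P; split.
- apply/andP; split; last exact: pt.
  by apply/set0Pn; exists (tnth t ord0); rewrite /sset inE mem_tnth.
- by rewrite /sset cardsE (card_uniqP ut) size_tuple.
- by apply: uniq_perm ut (enum_uniq _) _ => y; rewrite mem_enum /sset inE.
Qed.

Lemma valid0 s : valid set0 s = uniq s && pw (sset s).
Proof.
rewrite /valid set0U.
have -> : all (fun y => y \notin set0) s by apply/allP => y _; rewrite inE.
by [].
Qed.

Lemma pw0 : pw set0.
Proof. by apply/forall_inP => i; rewrite inE. Qed.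

Lemma TI_sum : \sum_(I | indep e I) TI e alpha I = \sum_(m < #|V|) UU set0 m.+1.
Proof.
rewrite /TI (sum_indep_perm (fun m t => Tord e alpha t)).
apply: eq_bigr => m _; rewrite /UU; apply: eq_big => t; first by rewrite valid0.
by move=> _; rewrite Tg_tuple; apply: eq_bigr => k _; rewrite set0U.
Qed.

Lemma EI_sum : \sum_(I | indep e I) EI e alpha I = \sum_(m < #|V|) VV set0 m.+1.
Proof.
rewrite /EI (sum_indep_perm (fun m t => Eord e alpha t)).
apply: eq_bigr => m _; rewrite /VV; apply: eq_big => t; first by rewrite valid0.
move=> _; rewrite /Eord Tg_tuple Sg_tuple; congr (_ * _).
  by apply: eq_bigr => k _; rewrite set0U.
by apply: eq_bigr => k _; rewrite set0U.
Qed.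

Lemma Tsum0 : Tsum set0 = 1 + \sum_(I | indep e I) TI e alpha I.
Proof.
rewrite /Tsum big_ord_recl UU0; last exact: pw0.
by rewrite TI_sum.
Qed.

Lemma Esum0 : Esum set0 = \sum_(I | indep e I) EI e alpha I.
Proof.
by rewrite /Esum big_ord_recl VV0 add0r EI_sum.
Qed.

End Comb.

From mathcomp Require Import boolp classical_sets topology normedtype sequences.
Import numFieldTopology.Exports numFieldNormedType.Exports.
Local Open Scope classical_set_scope.
Local Open Scope ring_scope.

Section Lim.
Variable R : realType.

Lemma ndc_le (u : R ^nat) (l : R) : {homo u : n m / (n <= m)%N >-> n <= m} ->
  u @ \oo --> l -> forall n, u n <= l.
Proof.
move=> nd ul n; have := nondecreasing_cvgn_le nd (cvgP _ ul) n.
by rewrite (cvg_lim _ ul).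
Qed.

Lemma lim_rec (P K : R ^nat) (k rho g : R) :
  {homo P : n m / (n <= m)%N >-> n <= m} -> P 0%N = 0 ->
  (forall N, P N.+1 = K N + rho * P N) ->
  K @ \oo --> k -> (forall N, K N <= k) -> 0 <= K 0%N ->
  0 <= rho -> rho < 1 -> g * (1 - rho) = k ->
  P @ \oo --> g.
Proof.
move=> nd P0 PS Kk Kle K0 r0 r1 hg.
have kg : k + rho * g = g by rewrite -hg; ring.
have g0 : 0 <= g.
  have k0 : 0 <= k by apply: le_trans K0 (Kle 0%N).
  by move: k0; rewrite -hg pmulr_lge0 // subr_gt0.
have Pg : forall N, P N <= g.
  elim=> [|N IH]; first by rewrite P0.
  rewrite PS -kg; apply: lerD => //; exact: ler_wpM2l.
have cP : cvgn P.
  apply: nondecreasing_is_cvgn => //; exists g => _ [n _ <-]; exact: Pg.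
set l := limn P.
have Pl : P @ \oo --> l := cP.
have PS1 : (fun N => P N.+1) @ \oo --> l by rewrite cvg_shiftS.
have PS2 : (fun N => P N.+1) @ \oo --> k + rho * l.
  have -> : (fun N => P N.+1) = (fun N => K N + rho * P N) by apply: funext => N; rewrite PS.
  apply: cvgD => //; exact: cvgMl_tmp.
have el : l = k + rho * l.
  have h1 := cvg_lim (@Rhausdorff R) PS1; have h2 := cvg_lim (@Rhausdorff R) PS2.
  by rewrite -h2 h1.
suff -> : g = l by [].
have : (g - l) * (1 - rho) = 0 by rewrite mulrBl hg; lra.
move/eqP; rewrite mulf_eq0 subr_eq0 => /orP[/eqP //|].
rewrite subr_eq0 => /eqP r1'; exfalso; lra.
Qed.

Lemma cvg_sumP (V : finType) (P : pred V) (c : V -> R) (u : V -> R ^nat) (l : V -> R) :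
  (forall x, P x -> u x @ \oo --> l x) ->
  (fun N => \sum_(x | P x) c x * u x N) @ \oo --> \sum_(x | P x) c x * l x.
Proof.
move=> H; elim: (index_enum V) => [|y r IH].
  have -> : (fun N => \sum_(x <- [::] | P x) c x * u x N) = (fun=> 0)
    by apply: funext => N; rewrite big_nil.
  rewrite big_nil; exact: cvg_cst.
have -> : (fun N => \sum_(x <- y :: r | P x) c x * u x N) =
   (fun N => (if P y then c y * u y N else 0) + \sum_(x <- r | P x) c x * u x N).
  by apply: funext => N; rewrite big_cons; case: ifP => _; rewrite ?add0r.
rewrite big_cons; case: ifP => Py.
  apply: cvgD => //; apply: cvgMl_tmp; exact: H.
rewrite -[X in _ --> X]add0r; apply: cvgD => //; exact: cvg_cst.
Qed.

End Lim.

Section Anal.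
Variables (R : realType) (V : finType) (e : rel V) (alpha : V -> R).
Hypothesis apos : forall i, 0 < alpha i.
Hypothesis stab : forall I : {set V}, indep e I -> asum alpha I < asum alpha (nbhd e I).
Implicit Types (A B : {set V}).
Local Notation asm := (asum alpha).
Local Notation nb := (nbhd e).
Local Notation S0 := (@finset.set0 V).

Lemma asm_ge0 A : 0 <= asm A.
Proof. by apply: sumr_ge0 => i _; exact: ltW. Qed.

Lemma asm_gt0 A : A != S0 -> 0 < asm A.
Proof.
case/finset.set0Pn => x xA; rewrite /asum (bigD1 x) //=.
have := apos x; have : 0 <= \sum_(i in A | i != x) alpha i.
  by apply: sumr_ge0 => i _; exact: ltW.
lra.
Qed.

Lemma gap B : pw e B -> B != S0 -> asm B < asm (nb B).
Proof. by move=> pB B0; apply: stab; apply/andP; split. Qed.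

Definition rho A := asm A / asm (nb A).
Definition rA A := (1 - rho A)^-1.

Lemma rho_ge0 A : 0 <= rho A.
Proof. by apply: divr_ge0; apply: asm_ge0. Qed.

Lemma rho0 : rho S0 = 0.
Proof. by rewrite /rho /asum finset.big_set0 mul0r. Qed.

Lemma rho_lt1 A : pw e A -> rho A < 1.
Proof.
move=> pA; case: (eqVneq A S0) => [->|A0]; first by rewrite rho0 ltr01.
have a0 := asm_gt0 A0; have g := gap pA A0.
by rewrite /rho ltr_pdivrMr ?mul1r // (lt_trans a0 g).
Qed.

Lemma rA_mul A : pw e A -> rA A * (1 - rho A) = 1.
Proof.
move=> pA; rewrite /rA mulVf //; have := rho_lt1 pA.
by rewrite subr_eq0 => h; apply/eqP => h'; move: h; rewrite -h' ltxx.
Qed.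

Lemma cc_ge0 A x : 0 <= cc e alpha A x.
Proof. by apply: divr_ge0; [exact: ltW | exact: asm_ge0]. Qed.

Lemma setU1_n0 x A : x |: A != S0.
Proof. by apply/finset.set0Pn; exists x; rewrite finset.setU11. Qed.

Lemma rr_rA B : pw e B -> B != S0 -> rr e alpha B = rA B.
Proof.
move=> pB B0; have a0 := asm_gt0 B0; have g := gap pB B0.
rewrite /rr /rA /rho.
have N0 : asm (nb B) != 0 by rewrite lt0r_neq0 // (lt_trans a0 g).
have Na : asm (nb B) - asm B != 0 by rewrite subr_eq0 gt_eqF.
field.
by rewrite Na N0.
Qed.

Lemma dd_cc A x : pw e (x |: A) -> dd e alpha A x = cc e alpha A x * rA (x |: A).
Proof.
move=> pB; rewrite -rr_rA ?setU1_n0 // /dd /cc /rr.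
have B0 := setU1_n0 x A.
have a0 := asm_gt0 B0; have g := gap pB B0.
have N0 : asm (nb (x |: A)) != 0 by rewrite lt0r_neq0 // (lt_trans a0 g).
have Na : asm (nb (x |: A)) - asm (x |: A) != 0 by rewrite subr_eq0 gt_eqF.
field.
by rewrite Na N0.
Qed.


Lemma ff_ge0 A q : 0 <= ff e alpha A q.
Proof.
elim: q A => [|q IH] A.
  by apply: sumr_ge0 => w _; rewrite [w]tuple0 /=.
rewrite ffS; apply: sumr_ge0 => x _; apply: mulr_ge0; [exact: cc_ge0 | exact: IH].
Qed.

Lemma seriesS (u : R ^nat) N : series u N.+1 = u 0%N + series (fun q => u q.+1) N.
Proof. by rewrite /series /= big_nat_recl. Qed.

Lemma series0 (u : R ^nat) : series u 0%N = 0.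
Proof. by rewrite /series /= big_geq. Qed.

Lemma series_nd (u : R ^nat) : (forall n, 0 <= u n) ->
  {homo series u : n m / (n <= m)%N >-> n <= m}.
Proof.
move=> h n m nm; rewrite /series /= (@big_cat_nat _ _ _ n 0 m _ _ (leq0n n) nm) /= lerDl.
by apply: sumr_ge0 => k _; exact: h.
Qed.

Lemma series_ge0 (u : R ^nat) N : (forall n, 0 <= u n) -> 0 <= series u N.
Proof. by move=> h; rewrite /series /=; apply: sumr_ge0 => k _; exact: h. Qed.

Lemma ff_split A q : pw e A -> ff e alpha A q.+1 = rho A * ff e alpha A q +
  \sum_(x | (x \notin A) && pw e (x |: A)) cc e alpha A x * ff e alpha (x |: A) q.
Proof.
move=> pA; rewrite ffS (bigID (fun x => x \in A)) /=; congr (_ + _); last first.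
  by apply: eq_bigl => x; rewrite andbC.
transitivity (\sum_(x in A) alpha x / asm (nb A) * ff e alpha A q).
  apply: eq_big => x.
    by case xA: (x \in A); [rewrite andbT (setU1_idE xA) | rewrite andbF].
  by move=> /andP[_ xA]; rewrite /cc (setU1_idE xA).
by rewrite /rho /asum -!mulr_suml.
Qed.

Definition GG A := rA A * Tsum e alpha A.
Definition HH A := rA A * (Esum e alpha A + (rA A - 1) * Tsum e alpha A).

Lemma ff_nd A : {homo series (ff e alpha A) : n m / (n <= m)%N >-> n <= m}.
Proof. by apply: series_nd => n; exact: ff_ge0. Qed.

Lemma qff_ge0 A n : 0 <= n%:R * ff e alpha A n.
Proof. by apply: mulr_ge0; [exact: ler0n | exact: ff_ge0]. Qed.

Lemma qff_nd A : {homo series (fun q => q%:R * ff e alpha A q) : n m / (n <= m)%N >-> n <= m}.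
Proof. by apply: series_nd => n; exact: qff_ge0. Qed.

Lemma stepG A : pw e A ->
  (forall x, x \notin A -> pw e (x |: A) ->
     series (ff e alpha (x |: A)) @ \oo --> GG (x |: A)) ->
  series (ff e alpha A) @ \oo --> GG A.
Proof.
move=> pA IH.
pose K N := 1 + \sum_(x | (x \notin A) && pw e (x |: A))
                   cc e alpha A x * series (ff e alpha (x |: A)) N.
apply: (lim_rec (K := K) (k := 1 + \sum_(x | (x \notin A) && pw e (x |: A))
                   cc e alpha A x * GG (x |: A)) (rho := rho A)).
- exact: ff_nd.
- exact: series0.
- move=> N; rewrite seriesS ff0 // /K.
  have -> : series (fun q => ff e alpha A q.+1) N = rho A * series (ff e alpha A) N +
     \sum_(x | (x \notin A) && pw e (x |: A)) cc e alpha A x * series (ff e alpha (x |: A)) N.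
    rewrite /series /=; under eq_bigr => q _ do rewrite ff_split //.
    rewrite big_split /= -mulr_sumr; congr (_ + _).
    rewrite exchange_big /=; apply: eq_bigr => x _; by rewrite mulr_sumr.
  ring.
- apply: cvgD; first exact: cvg_cst.
  by apply: cvg_sumP => x /andP[xA pxA]; exact: IH.
- move=> N; rewrite /K lerD2l; apply: ler_sum => x /andP[xA px].
  apply: ler_wpM2l; first exact: cc_ge0.
  exact: (ndc_le (ff_nd _) (IH x xA px)).
- rewrite /K; apply: addr_ge0 => //; apply: sumr_ge0 => x _; apply: mulr_ge0.
    exact: cc_ge0.
  by apply: series_ge0 => n; exact: ff_ge0.
- exact: rho_ge0.
- exact: rho_lt1.
- rewrite /GG mulrAC rA_mul // mul1r TsumS //; congr (_ + _).
  by apply: eq_bigr => x /andP[_ px]; rewrite dd_cc // /GG mulrA.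
Qed.


Lemma qE A q : pw e A ->
  q.+1%:R * ff e alpha A q.+1 = rho A * (q%:R * ff e alpha A q) + rho A * ff e alpha A q +
  \sum_(x | (x \notin A) && pw e (x |: A))
     cc e alpha A x * (q%:R * ff e alpha (x |: A) q + ff e alpha (x |: A) q).
Proof.
move=> pA.
have -> : \sum_(x | (x \notin A) && pw e (x |: A))
     cc e alpha A x * (q%:R * ff e alpha (x |: A) q + ff e alpha (x |: A) q) =
   q%:R * \sum_(x | (x \notin A) && pw e (x |: A)) cc e alpha A x * ff e alpha (x |: A) q +
   \sum_(x | (x \notin A) && pw e (x |: A)) cc e alpha A x * ff e alpha (x |: A) q.
  by rewrite mulr_sumr -big_split; apply: eq_bigr => x _ /=; ring.
rewrite ff_split // -natr1; ring.
Qed.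

Lemma stepH A : pw e A ->
  series (ff e alpha A) @ \oo --> GG A ->
  (forall x, x \notin A -> pw e (x |: A) ->
     series (ff e alpha (x |: A)) @ \oo --> GG (x |: A) /\
     series (fun q => q%:R * ff e alpha (x |: A) q) @ \oo --> HH (x |: A)) ->
  series (fun q => q%:R * ff e alpha A q) @ \oo --> HH A.
Proof.
move=> pA HG IH.
pose K N := rho A * series (ff e alpha A) N +
   \sum_(x | (x \notin A) && pw e (x |: A))
       cc e alpha A x * (series (fun q => q%:R * ff e alpha (x |: A) q) N +
                         series (ff e alpha (x |: A)) N).
apply: (lim_rec (K := K) (k := rho A * GG A + \sum_(x | (x \notin A) && pw e (x |: A))
                   cc e alpha A x * (HH (x |: A) + GG (x |: A))) (rho := rho A)).
- exact: qff_nd.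
- exact: series0.
- move=> N; rewrite seriesS mul0r add0r /K /series /=.
  under eq_bigr => q _ do rewrite qE //.
  rewrite big_split big_split /= -!mulr_sumr exchange_big /=.
  have -> : \sum_(x | (x \notin A) && pw e (x |: A)) \sum_(0 <= q < N)
       cc e alpha A x * (q%:R * ff e alpha (x |: A) q + ff e alpha (x |: A) q) =
     \sum_(x | (x \notin A) && pw e (x |: A)) cc e alpha A x *
       (\sum_(0 <= q < N) q%:R * ff e alpha (x |: A) q + \sum_(0 <= q < N) ff e alpha (x |: A) q).
    by apply: eq_bigr => x _; rewrite -big_split mulr_sumr.
  ring.
- apply: cvgD; first by apply: cvgMl_tmp.
  apply: (cvg_sumP (u := fun x N => series (fun q => q%:R * ff e alpha (x |: A) q) N +
                         series (ff e alpha (x |: A)) N)) => x /andP[xA pxA].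
  by have [h1 h2] := IH x xA pxA; apply: cvgD.
- move=> N; rewrite /K; apply: lerD.
    apply: ler_wpM2l; first exact: rho_ge0.
    exact: (ndc_le (ff_nd _) HG).
  apply: ler_sum => x /andP[xA px]; have [h1 h2] := IH x xA px.
  apply: ler_wpM2l; first exact: cc_ge0.
  apply: lerD; first exact: (ndc_le (qff_nd _) h2).
  exact: (ndc_le (ff_nd _) h1).
- rewrite /K; apply: addr_ge0.
    apply: mulr_ge0; first exact: rho_ge0.
    by apply: series_ge0 => n; exact: ff_ge0.
  apply: sumr_ge0 => x _; apply: mulr_ge0; first exact: cc_ge0.
  by apply: addr_ge0; apply: series_ge0 => n; [exact: qff_ge0 | exact: ff_ge0].
- exact: rho_ge0.
- exact: rho_lt1.
- have hE : \sum_(x | (x \notin A) && pw e (x |: A)) cc e alpha A x * (HH (x |: A) + GG (x |: A))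
            = Esum e alpha A.
    rewrite [RHS]EsumS; apply: eq_bigr => x /andP[_ px].
    rewrite dd_cc // rr_rA ?setU1_n0 // /HH /GG; ring.
  rewrite hE /HH mulrAC rA_mul // mul1r /GG.
  have h1 : rA A - 1 = rho A * rA A.
    by rewrite -[X in _ - X](rA_mul pA); ring.
  rewrite h1; ring.
Qed.

Lemma main_lim n A : (#|~: A| <= n)%N -> pw e A ->
  series (ff e alpha A) @ \oo --> GG A /\
  series (fun q => q%:R * ff e alpha A q) @ \oo --> HH A.
Proof.
elim: n A => [|n IHn] A hn pA.
  have IH : forall x, x \notin A -> pw e (x |: A) ->
     series (ff e alpha (x |: A)) @ \oo --> GG (x |: A) /\
     series (fun q => q%:R * ff e alpha (x |: A) q) @ \oo --> HH (x |: A).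
    move=> x xA; exfalso; move: hn; rewrite leqn0 finset.cards_eq0 => /eqP hA.
    have : x \in ~: A by rewrite finset.in_setC.
    by rewrite hA finset.in_set0.
  have hG := stepG pA (fun x xA px => (IH x xA px).1).
  by split => //; apply: stepH.
have IH : forall x, x \notin A -> pw e (x |: A) ->
     series (ff e alpha (x |: A)) @ \oo --> GG (x |: A) /\
     series (fun q => q%:R * ff e alpha (x |: A) q) @ \oo --> HH (x |: A).
  move=> x xA px; apply: IHn => //.
  have h1 := finset.cardsC A; have h2 := finset.cardsC (x |: A).
  have h3 := finset.cardsU1 x A; rewrite xA /= in h3.
  lia.
have hG := stepG pA (fun x xA px => (IH x xA px).1).
by split => //; apply: stepH.
Qed.

End Anal.

Theorem mainTheorem5 (R : realType) (V : finType) (e : rel V) (alpha : V -> R) :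
  irreflexive e -> symmetric e -> (forall x y : V, connect e x y) ->
  (forall i, 0 < alpha i) -> \sum_(i : V) alpha i = 1 ->
  (forall I : {set V}, indep e I -> asum alpha I < asum alpha (nbhd e I)) ->
  exists Z S : R,
    series (wsum e alpha) @ \oo --> Z /\
    series (fun q => q%:R * wsum e alpha q) @ \oo --> S /\
    S / Z = (1 + \sum_(I : {set V} | indep e I) TI e alpha I)^-1 *
            (\sum_(I : {set V} | indep e I) EI e alpha I).
Proof.
move=> _ _ _ hapos _ hstab.
have [hG hH] := main_lim hapos hstab (leqnn #|~: (@finset.set0 V)|) (pw0 e).
exists (GG e alpha finset.set0), (HH e alpha finset.set0).
have wE : wsum e alpha = ff e alpha finset.set0 by apply: funext => q; exact: wsum_ff.
rewrite wE; split => //; split => //.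
rewrite /HH /GG /rA rho0 subr0 invr1 subrr mul0r addr0 !mul1r Tsum0 Esum0.
by rewrite mulrC.
Qed.
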